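(* In the online volunteer notification problem, under the index-based priority scheme and the sparse notification (SN) policy, for every volunteer $v\in[V]$, the expected number of tasks completed by $v$ is at least $J_{v,1}$.
   Context: Online volunteer notification problem. An instance consists of volunteers $[V]$, task types $[S]$, horizon $T$, arrival probabilities $\lambda_{s,t}\ge0$ with $\sum_{s=1}^S\lambda_{s,t}\le1$ (and $\lambda_{0,t}=1-\sum_s\lambda_{s,t}$), match probabilities $p_{v,s}\in[0,1]$, and a probability mass function $g$ on the positive integers with CDF $G(\tau)=\sum_{i\le\tau}g(i)$, $G(0)=0$. In each period $t$ at most one task arrives, of type $s$ with probability $\lambda_{s,t}$, independently across periods. All volunteers start active. Upon an arrival, the platform notifies a subset of volunteers; each notified active volunteer $v$ responds positively independently with probability $p_{v,s}$. A volunteer active and notified at time $t$ becomes inactive (regardless of response) and becomes active again at $t+Z$, $Z\sim g$ independent; inactive volunteers ignore notifications and are unaffected by them. Index-based priority scheme: if several notified active volunteers respond positively to a task, the one with the smallest index completes it. Ex ante solution $\mathbf{x}^*$: let $\mathcal{P}$ be the set of $\mathbf{x}$ with $0\le x_{v,s,t}\le1$ and $\sum_{\tau=1}^t\sum_s\lambda_{s,\tau}x_{v,s,\tau}(1-G(t-\tau))\le1$ for all $v,t$; $f(\mathbf{x})=\sum_{t,s}\lambda_{s,t}(1-\prod_v(1-x_{v,s,t}p_{v,s}))$; $\mathbf{x}^*_{LP}$ maximizes $\sum_{t,s}\lambda_{s,t}\min\{\sum_vx_{v,s,t}p_{v,s},1\}$ over $\mathcal{P}$; $\mathbf{x}^*_{AA}$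 is the output of: $\mathbf{x}^0=\mathbf{0}$, for $i=1..m$ ($m\in\mathbb{N}$) $\mathbf{y}^i\in\arg\max_{\mathbf{x}\in\mathcal{P}}\langle\mathbf{x},\nabla f(\mathbf{x}^{i-1})\rangle$, $\mathbf{x}^i=\mathbf{x}^{i-1}+\mathbf{y}^i/m$, output $\mathbf{x}^m$; $\mathbf{x}^*_{SQ}$ is built for $v=1..V$ in order with $(x^{SQ}_{v,s,t})_{s,t}$ optimal for $\max\sum_{t,s}\lambda_{s,t}\prod_{u<v}(1-p_{u,s}x^{SQ}_{u,s,t})p_{v,s}x_{v,s,t}$ s.t. $0\le x_{v,s,t}\le1$ and $\sum_{\tau\le t}\sum_s\lambda_{s,\tau}x_{v,s,\tau}(1-G(t-\tau))\le1$ for all $t$; $\mathbf{x}^*\in\arg\max_{\mathbf{x}\in\{\mathbf{x}^*_{LP},\mathbf{x}^*_{AA},\mathbf{x}^*_{SQ}\}}f(\mathbf{x})$. SN policy: offline, for $v=1,\dots,V$ in order: $r_{v,s,t}=p_{v,s}\prod_{u=1}^{v-1}(1-\tilde x_{u,s,t}p_{u,s})$; $J_{v,T+1}=0$; for $t=T$ down to $1$: $\tilde x_{v,s,t}=x^*_{v,s,t}\mathbb{I}\{r_{v,s,t}+\sum_{\tau=t+1}^Tg(\tau-t)J_{v,\tau}\ge J_{v,t+1}\}$ for $s\in[S]$ (with $\tilde x_{v,0,t}=r_{v,0,t}=0$), and $J_{v,t}=\sum_{s=0}^S\lambda_{s,t}\big((1-\tilde x_{v,s,t})J_{v,t+1}+\tilde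 x_{v,s,t}(r_{v,s,t}+\sum_{\tau=t+1}^Tg(\tau-t)J_{v,\tau})\big)$. Online: when a task of type $s$ arrives at time $t$, each volunteer $v$ is notified independently with probability $\tilde x_{v,s,t}$. *)

(* Defs.v *)
From HB Require Import structures.
From mathcomp Require Import all_boot all_order all_algebra.
From mathcomp Require Import reals.
Set Implicit Arguments. Unset Strict Implicit. Unset Printing Implicit Defensive.
Import Order.TTheory GRing.Theory Num.Theory.
Local Open Scope ring_scope.

(* Conventions: volunteers [V] = 'I_V (smaller ordinal = higher priority),
   task types [S] = 'I_S (type 0 = "no task" is implicit, with probability
   1 - sum_s lam s t), periods t = 1..T (nat).  Solutions x are functions
   'I_V -> 'I_S -> nat -> R; only t in 1..T matters. *)

Section Online.
Variables (R : realType) (V S T : nat).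
Variables (lam : 'I_S -> nat -> R) (p : 'I_V -> 'I_S -> R) (g : nat -> R).

Definition sol := 'I_V -> 'I_S -> nat -> R.

Definition pmf_pos : Prop :=
  g 0%N = 0 /\ (forall i, 0 <= g i) /\
  (forall n, \sum_(i < n) g i <= 1) /\
  (forall e, 0 < e -> exists n, 1 - e < \sum_(i < n) g i).

Definition Gcdf (n : nat) : R := \sum_(1 <= i < n.+1) g i.

Definition row_feasible (y : 'I_S -> nat -> R) : Prop :=
  (forall s t, (1 <= t <= T)%N -> 0 <= y s t <= 1) /\
  (forall t, (1 <= t <= T)%N ->
     \sum_(1 <= tau < t.+1) \sum_(s < S) lam s tau * y s tau * (1 - Gcdf (t - tau))
       <= 1).

Definition Pset (x : sol) : Prop := forall v, row_feasible (x v).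

Definition f_obj (x : sol) : R :=
  \sum_(1 <= t < T.+1) \sum_(s < S)
     lam s t * (1 - \prod_(v < V) (1 - x v s t * p v s)).

Definition f_LP (x : sol) : R :=
  \sum_(1 <= t < T.+1) \sum_(s < S)
     lam s t * Num.min (\sum_(v < V) x v s t * p v s) 1.

Definition is_xLP (x : sol) : Prop :=
  Pset x /\ forall y, Pset y -> f_LP y <= f_LP x.

Definition grad_f (x : sol) : sol := fun v s t =>
  lam s t * p v s * \prod_(u < V | u != v) (1 - x u s t * p u s).

Definition inner (x y : sol) : R :=
  \sum_(v < V) \sum_(s < S) \sum_(1 <= t < T.+1) x v s t * y v s t.

(* output of the continuous-greedy / Frank-Wolfe scheme with some m >= 1 *)
Definition is_xAA (x : sol) : Prop :=
  exists (m : nat) (xs ys : nat -> sol),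
    (0 < m)%N /\
    xs 0%N = (fun _ _ _ => 0) /\
    (forall i, (1 <= i <= m)%N ->
       Pset (ys i) /\
       (forall z, Pset z -> inner z (grad_f (xs i.-1)) <= inner (ys i) (grad_f (xs i.-1))) /\
       xs i = (fun v s t => xs i.-1 v s t + ys i v s t / m%:R)) /\
    x = xs m.

Definition sq_obj (x : sol) (v : 'I_V) (y : 'I_S -> nat -> R) : R :=
  \sum_(1 <= t < T.+1) \sum_(s < S)
    lam s t * (\prod_(u < V | (u < v)%N) (1 - p u s * x u s t)) * p v s * y s t.

Definition is_xSQ (x : sol) : Prop :=
  forall v, row_feasible (x v) /\
    forall y, row_feasible y -> sq_obj x v y <= sq_obj x v (x v).

Definition is_xstar (xs : sol) : Prop :=
  exists xLP xAA xSQ : sol,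
    is_xLP xLP /\ is_xAA xAA /\ is_xSQ xSQ /\
    (xs = xLP \/ xs = xAA \/ xs = xSQ) /\
    f_obj xLP <= f_obj xs /\ f_obj xAA <= f_obj xs /\ f_obj xSQ <= f_obj xs.

Definition r_SN (xt : sol) (v : 'I_V) (s : 'I_S) (t : nat) : R :=
  p v s * \prod_(u < V | (u < v)%N) (1 - xt u s t * p u s).

Definition cont (J : 'I_V -> nat -> R) (v : 'I_V) (t : nat) : R :=
  \sum_(t.+1 <= tau < T.+1) g (tau - t) * J v tau.

(* xt and J are the (uniquely determined) quantities computed by SN from xstar *)
Definition SN_offline (xstar xt : sol) (J : 'I_V -> nat -> R) : Prop :=
  forall v : 'I_V,
    J v T.+1 = 0 /\
    forall t, (1 <= t <= T)%N ->
      (forall s, xt v s t =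
         (if J v t.+1 <= r_SN xt v s t + cont J v t then xstar v s t else 0)) /\
      J v t = (1 - \sum_(s < S) lam s t) * J v t.+1 +
              \sum_(s < S) lam s t *
                 ((1 - xt v s t) * J v t.+1 + xt v s t * (r_SN xt v s t + cont J v t)).

(* State: for each volunteer, the period at which it is (again) active
   (active at t iff state u <= t).  A return time beyond the horizon is
   recorded as T+1. *)
Definition state := {ffun 'I_V -> 'I_(T.+2)}.

(* law of min(t + Z, T+1), Z ~ g *)
Definition ret_w (t r : nat) : R :=
  if (t < r <= T)%N then g (r - t)
  else if r == T.+1 then 1 - Gcdf (T - t) else 0.

Definition trans_w (t : nat) (Act : {set 'I_V}) (sg rho : state) : R :=
  \prod_(u < V) (if u \in Act then ret_w t (rho u) else (rho u == sg u)%:R).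

(* expected number of tasks completed by v during periods t, ..., t+n-1,
   starting from state sg at period t, when each volunteer is notified of a
   type-s task at time t independently with probability xt u s t *)
Fixpoint EV (xt : sol) (v : 'I_V) (n t : nat) (sg : state) : R :=
  match n with
  | 0%N => 0
  | n'.+1 =>
    (1 - \sum_(s < S) lam s t) * EV xt v n' t.+1 sg +
    \sum_(s < S) lam s t *
      \sum_(N : {set 'I_V})
        ((\prod_(u in N) xt u s t) * \prod_(u in ~: N) (1 - xt u s t)) *
        (let Act := [set u in N | (sg u <= t)%N] in
         (\sum_(A : {set 'I_V} | A \subset Act)
            ((\prod_(u in A) p u s) * \prod_(u in Act :\: A) (1 - p u s)) *
            ((v \in A) && [forall u in A, (v <= u)%N])%:R)
         + \sum_(rho : state) trans_w t Act sg rho * EV xt v n' t.+1 rho)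
  end.

Definition init_state : state := [ffun _ => ord0].

Definition expected_completed (xt : sol) (v : 'I_V) : R :=
  EV xt v T 1 init_state.

End Online.

(* Main.v *)
Require Import Defs.
From HB Require Import structures.
From mathcomp Require Import all_boot all_order all_algebra.
From mathcomp Require Import reals.
Import Order.TTheory GRing.Theory Num.Theory.
Set Implicit Arguments. Unset Strict Implicit. Unset Printing Implicit Defensive.
Local Open Scope ring_scope.

Lemma sumset (R : comNzRingType) (I : finType) (w : I -> bool -> R) :
  \sum_(N : {set I}) \prod_i w i (i \in N) = \prod_i (w i true + w i false).
Proof.
rewrite bigA_distr; apply: eq_bigr => N _; apply: eq_bigr => i _.
by case: (i \in N).
Qed.

Lemma Pform (R : comNzRingType) (I : finType) (N : {set I}) (x : I -> R) :
  (\prod_(u in N) x u) * \prod_(u in ~: N) (1 - x u)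
  = \prod_u (if u \in N then x u else 1 - x u).
Proof.
rewrite (big_mkcond (fun u => u \in N)) (big_mkcond (fun u => u \in ~: N)) -big_split.
by apply: eq_bigr => u _; rewrite in_setC /=; case: (u \in N); rewrite /= ?mulr1 ?mul1r.
Qed.
From mathcomp Require Import ring lra.

Definition cc (n : nat) (v : 'I_n) (i : 'I_n) (b : bool) : nat :=
  if i == v then nat_of_bool b else if b then nat_of_bool (v <= i)%N else 1%N.

Lemma ind_prod (R : comNzRingType) (n : nat) (A : {set 'I_n}) (v : 'I_n) :
  \prod_i ((cc v i (i \in A))%:R : R) = ((v \in A) && [forall u in A, (v <= u)%N])%:R.
Proof.
case: (boolP ((v \in A) && _)).
  move=> /andP [vA /forallP H]; rewrite big1 // => i _; rewrite /cc.
  case: eqP => [->|ne]; first by rewrite vA.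
  case iA: (i \in A) => //; by have := H i; rewrite iA /= => ->.
rewrite negb_and => /orP [nvA | /forallPn [u]].
  by rewrite (bigD1 v) //= /cc eqxx (negbTE nvA) mul0r.
rewrite negb_imply => /andP [uA nle].
have une : u != v by apply/eqP => E; move: nle; rewrite E leqnn.
by rewrite (bigD1 u) //= /cc (negbTE une) uA (negbTE nle) mul0r.
Qed.

Lemma X_prod (R : comNzRingType) (n : nat) (A B : {set 'I_n}) (q : 'I_n -> R) :
  \prod_i (if i \in B then (if i \in A then q i else 1 - q i) else (if i \in A then 0 else 1))
  = if A \subset B then (\prod_(u in A) q u) * \prod_(u in B :\: A) (1 - q u) else 0.
Proof.
case: (boolP (A \subset B)) => H.
  rewrite (big_mkcond (fun u => u \in A)) (big_mkcond (fun u => u \in B :\: A)) -big_split.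
  apply: eq_bigr => i _ /=; rewrite in_setD.
  case iA: (i \in A); case iB: (i \in B) => /=; rewrite ?mulr1 ?mul1r //.
  by move: (subsetP H i); rewrite iA iB => /(_ isT).
case/subsetPn: H => i iA niB.
by rewrite (bigD1 i) //= iA (negbTE niB) mul0r.
Qed.

Definition ee (R : comNzRingType) (n : nat) (q : 'I_n -> R) (v i : 'I_n) (b : bool) : R :=
  if b then (if i == v then q i else if (v <= i)%N then 1 else 1 - q i)
  else (if i == v then 0 else 1).

Lemma imm_form (R : comNzRingType) (n : nat) (B : {set 'I_n}) (q : 'I_n -> R) (v : 'I_n) :
  \sum_(A : {set 'I_n} | A \subset B)
     ((\prod_(u in A) q u) * \prod_(u in B :\: A) (1 - q u)) *
     ((v \in A) && [forall u in A, (v <= u)%N])%:R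
  = \prod_i ee q v i (i \in B).
Proof.
rewrite big_mkcond /=.
pose w i b := (if i \in B then (if b then q i else 1 - q i) else (if b then 0 else 1)) *
   ((cc v i b)%:R : R).
transitivity (\sum_(A : {set 'I_n}) \prod_i w i (i \in A)).
  apply: eq_bigr => A _; rewrite /w big_split /= ind_prod.
  have -> : \prod_i (if i \in B then (if i \in A then q i else 1 - q i) else (if i \in A then 0 else 1))
    = \prod_i (if i \in B then (if i \in A then q i else 1 - q i) else (if i \in A then 0 else 1)) by [].
  rewrite X_prod; case: (A \subset B); by rewrite ?mul0r.
rewrite sumset; apply: eq_bigr => i _; rewrite /w /ee /cc.
case: (i \in B); case: (eqVneq i v) => [E|ne]; try (case: (v <= i)%N); rewrite /=; ring.
Qed.

Lemma marg (R : realType) (V T : nat) (g : nat -> R) (t : nat) (Act : {set 'I_V})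
  (sg : state V T) (v : 'I_V) (h : nat -> R) :
  \sum_(r < T.+2) ret_w T g t r = 1 ->
  \sum_(rho : state V T) trans_w g t Act sg rho * h (rho v) =
  if v \in Act then \sum_(r < T.+2) ret_w T g t r * h r else h (sg v).
Proof.
move=> H1.
pose W u (r : 'I_(T.+2)) := (if u \in Act then ret_w T g t r else (r == sg u)%:R) *
   (if u == v then h r else 1).
transitivity (\sum_(rho : {ffun 'I_V -> 'I_(T.+2)}) \prod_u W u (rho u)).
  apply: eq_bigr => rho _; rewrite /trans_w /W big_split /=; congr (_ * _).
  by rewrite (bigD1 v) //= eqxx big1 ?mulr1 // => u /negbTE ->.
rewrite -bigA_distr_bigA (bigD1 v) //= [X in _ * X]big1 ?mulr1.
  rewrite /W eqxx; case: (v \in Act); first by [].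
  rewrite (bigD1 (sg v)) //= eqxx mul1r big1 ?addr0 // => r /negbTE ->.
  by rewrite mul0r.
move=> u /negbTE uv; rewrite /W uv; under eq_bigr do rewrite mulr1.
case: (u \in Act) => //.
by rewrite (bigD1 (sg u)) //= eqxx big1 ?addr0 // => r /negbTE ->.
Qed.

Lemma ret_split (R : realType) (T : nat) (g : nat -> R) (t : nat) (F : nat -> R) :
  (t <= T)%N ->
  \sum_(r < T.+2) ret_w T g t r * F r =
  \sum_(t.+1 <= r < T.+1) g (r - t)%N * F r + (1 - Gcdf g (T - t)%N) * F T.+1.
Proof.
move=> tT.
rewrite -(big_mkord xpredT (fun r => ret_w T g t r * F r)).
rewrite big_nat_recr //= (@big_cat_nat _ _ _ t.+1) //=.
rewrite big_nat_cond big1 ?add0r; last first.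
  move=> r /andP [/andP [_ rlt] _]; rewrite /ret_w.
  have -> : (t < r)%N = false by rewrite ltnNge -ltnS rlt.
  have -> : (r == T.+1) = false by apply/negbTE; rewrite neq_ltn; rewrite (leq_ltn_trans _ (leq_trans rlt _)) ?ltnS.
  by rewrite mul0r.
congr (_ + _).
  apply: eq_big_nat => r /andP [lr rl]; rewrite /ret_w lr /=.
  by rewrite -ltnS rl.
by rewrite /ret_w ltnn andbF eqxx.
Qed.

Lemma gsum (R : realType) (T : nat) (g : nat -> R) (t : nat) : (t <= T)%N ->
  \sum_(t.+1 <= r < T.+1) g (r - t)%N = Gcdf g (T - t)%N.
Proof.
move=> tT; rewrite /Gcdf -[t.+1]add1n big_addn subSn //.
by apply: eq_bigr => i _; rewrite addnK.
Qed.

Lemma ret_sum (R : realType) (T : nat) (g : nat -> R) (t : nat) : (t <= T)%N ->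
  \sum_(r < T.+2) ret_w T g t r = 1.
Proof.
move=> tT; have := ret_split g (fun _ => 1) tT.
under eq_bigr do rewrite mulr1.
move=> ->; under eq_big_nat do rewrite mulr1.
by rewrite gsum // mulr1 addrC subrK.
Qed.

Lemma ret_cont (R : realType) (V T : nat) (g : nat -> R) (J : 'I_V -> nat -> R) v (t : nat) :
  (t <= T)%N -> J v T.+1 = 0 ->
  \sum_(r < T.+2) ret_w T g t r * J v (maxn t.+1 r) = cont T g J v t.
Proof.
move=> tT J0; rewrite (ret_split g (fun r => J v (maxn t.+1 r)) tT).
rewrite (maxn_idPr _) ?ltnS // J0 mulr0 addr0 /cont.
by apply: eq_big_nat => r /andP [lr _]; rewrite (maxn_idPr lr).
Qed.

Lemma sumN_imm (R : realType) (V : nat) (x q : 'I_V -> R) (al : 'I_V -> bool) (v : 'I_V) :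
  \sum_(N : {set 'I_V}) ((\prod_(u in N) x u) * \prod_(u in ~: N) (1 - x u)) *
     \prod_i ee q v i (i \in [set u in N | al u])
  = \prod_i (x i * ee q v i (al i) + (1 - x i) * ee q v i false).
Proof.
pose w i b := (if b then x i else 1 - x i) * ee q v i (b && al i).
transitivity (\sum_(N : {set 'I_V}) \prod_i w i (i \in N)).
  apply: eq_bigr => N _; rewrite Pform -big_split /=.
  by apply: eq_bigr => i _; rewrite /w inE.
by rewrite sumset.
Qed.

Lemma sumN_H (R : realType) (V : nat) (x : 'I_V -> R) (al : 'I_V -> bool) (v : 'I_V) (c d : R) :
  \sum_(N : {set 'I_V}) ((\prod_(u in N) x u) * \prod_(u in ~: N) (1 - x u)) *
     (if v \in [set u in N | al u] then c else d)
  = x v * (if al v then c else d) + (1 - x v) * d.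
Proof.
pose w i b := (if b then x i else 1 - x i) * (if i == v then (if b && al v then c else d) else 1).
transitivity (\sum_(N : {set 'I_V}) \prod_i w i (i \in N)).
  apply: eq_bigr => N _; rewrite Pform big_split /=; congr (_ * _).
  by rewrite (bigD1 v) //= eqxx big1 ?mulr1 ?inE // => i /negbTE ->.
rewrite sumset (bigD1 v) //= big1 ?mulr1.
  by rewrite /w eqxx /=; case: (al v); rewrite /=.
by move=> i /negbTE iv; rewrite /w iv !mulr1 addrC subrK.
Qed.

Lemma imm_lb (R : realType) (V : nat) (x q : 'I_V -> R) (al : 'I_V -> bool) (v : 'I_V) :
  (forall i, 0 <= x i <= 1) -> (forall i, 0 <= q i <= 1) -> al v ->
  x v * (q v * \prod_(u < V | (u < v)%N) (1 - x u * q u))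
  <= \prod_i (x i * ee q v i (al i) + (1 - x i) * ee q v i false).
Proof.
move=> Hx Hq alv.
rewrite [X in _ <= X](bigD1 v) //= /ee eqxx alv /= mulr0 addr0 mulrA.
have /andP [x0 x1] := Hx v; have /andP [q0 q1] := Hq v.
apply: ler_wpM2l; first exact: mulr_ge0.
rewrite big_mkcond (bigD1 v) //= ltnn mul1r.
apply: ler_prod => i iv; rewrite (negbTE iv).
have /andP [xi0 xi1] := Hx i; have /andP [qi0 qi1] := Hq i.
case: (ltnP i v) => [ivl|vi].
  case: (al i); apply/andP; split; nra.
case: (al i); apply/andP; split; nra.
Qed.

Lemma Gcdf_le1 (R : realType) (g : nat -> R) k : pmf_pos g -> Gcdf g k <= 1.
Proof.
case=> g0 [_ [gs _]].
have <- : \sum_(i < k.+1) g i = Gcdf g k.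
  by rewrite /Gcdf -(big_mkord xpredT g) big_ltn // g0 add0r.
exact: gs.
Qed.

Lemma ret_ge0 (R : realType) (T : nat) (g : nat -> R) t r : pmf_pos g -> 0 <= ret_w T g t r.
Proof.
move=> Hg; rewrite /ret_w.
case: ifP => _; first by case: Hg => _ [H _].
case: ifP => _ //; by rewrite subr_ge0 Gcdf_le1.
Qed.

Lemma trans_ge0 (R : realType) (V T : nat) (g : nat -> R) t Act (sg rho : state V T) :
  pmf_pos g -> 0 <= trans_w g t Act sg rho.
Proof.
move=> Hg; apply: prodr_ge0 => u _; case: ifP => _; first exact: ret_ge0.
by rewrite ler0n.
Qed.

Lemma main_ind (R : realType) (V S T : nat)
  (lam : 'I_S -> nat -> R) (p : 'I_V -> 'I_S -> R) (g : nat -> R)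
  (xstar xt : 'I_V -> 'I_S -> nat -> R) (J : 'I_V -> nat -> R) :
  (forall s t, 0 <= lam s t) ->
  (forall t, \sum_(s < S) lam s t <= 1) ->
  (forall v s, 0 <= p v s <= 1) ->
  pmf_pos g ->
  (forall u s t, (1 <= t <= T)%N -> 0 <= xt u s t <= 1) ->
  SN_offline T lam p g xstar xt J ->
  forall v : 'I_V, forall k t, (t + k = T.+1)%N -> (1 <= t)%N -> forall sg : state V T,
  J v (maxn t (sg v)) <= EV lam p g xt v k t sg.
Proof.
move=> Hlam HL Hp Hg Hxt HSN v k; elim: k => [|k IH] t tk t1 sg.
  rewrite addn0 in tk; subst t.
  have [J0 _] := HSN v.
  have le : (sg v <= T.+1)%N by rewrite -ltnS ltn_ord.
  by rewrite (maxn_idPl le) J0.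
have tT : (t <= T)%N by rewrite -ltnS -tk addnS ltnS leq_addr.
have IH2 : forall rho : state V T, J v (maxn t.+1 (rho v)) <= EV lam p g xt v k t.+1 rho.
  by apply: IH; rewrite ?addSnnS.
have [_ HSNt] := HSN v.
have tr : (1 <= t <= T)%N by rewrite t1 tT.
have [Hxts HJt] := HSNt t tr.
have Eq : J v (maxn t (sg v)) = (1 - \sum_(s < S) lam s t) * J v (maxn t.+1 (sg v)) +
   \sum_(s < S) lam s t * (xt v s t * (if (sg v <= t)%N then r_SN p xt v s t + cont T g J v t
        else J v (maxn t.+1 (sg v))) + (1 - xt v s t) * J v (maxn t.+1 (sg v))).
  case: (leqP (sg v) t) => [le|lt].
    rewrite (maxn_idPl (leqW le)) HJt; congr (_ + _).
    by apply: eq_bigr => s _; ring.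
  rewrite (maxn_idPr lt).
  have E2 : forall s, lam s t * (xt v s t * J v (sg v) + (1 - xt v s t) * J v (sg v))
     = lam s t * J v (sg v) by move=> s; ring.
  rewrite (eq_bigr _ (fun s _ => E2 s)) -big_distrl /=; ring.
rewrite Eq /=; apply: lerD.
  by apply: ler_wpM2l; [rewrite subr_ge0 | exact: IH2].
apply: ler_sum => s _; apply: ler_wpM2l; first exact: Hlam.
have xb : forall u, 0 <= xt u s t <= 1 by move=> u; apply: Hxt.
have pb : forall u, 0 <= p u s <= 1 by move=> u; apply: Hp.
apply: (@le_trans _ _ (\sum_(N : {set 'I_V})
    ((\prod_(u in N) xt u s t) * \prod_(u in ~: N) (1 - xt u s t)) *
    (\prod_i ee (fun u => p u s) v i (i \in [set u in N | (sg u <= t)%N]) +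
     (if v \in [set u in N | (sg u <= t)%N] then
        \sum_(r < T.+2) ret_w T g t r * J v (maxn t.+1 r)
      else J v (maxn t.+1 (sg v)))))).
  have [J0 _] := HSN v.
  under eq_bigr do rewrite mulrDr.
  rewrite big_split /=.
  rewrite (sumN_imm (fun u => xt u s t) (fun u => p u s) (fun u => (sg u <= t)%N) v).
  rewrite ret_cont //.
  rewrite (sumN_H (fun u => xt u s t) (fun u => (sg u <= t)%N) v).
  case: (leqP (sg v) t) => le.
    have lb := @imm_lb _ _ (fun u => xt u s t) (fun u => p u s) (fun u => (sg u <= t)%N) v xb pb le.
    move: lb; rewrite /r_SN /= => lb.
    lra.
  rewrite (bigD1 v) //= /ee eqxx leqNgt le /= !mulr0 addr0 mul0r add0r.
  by [].
apply: ler_sum => N _.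
apply: ler_wpM2l.
  apply: mulr_ge0; apply: prodr_ge0 => u _; have /andP [h1 h2] := xb u => //.
  by rewrite subr_ge0.
apply: lerD.
  by rewrite (@imm_form _ _ [set u in N | (sg u <= t)%N] (fun u => p u s) v).
have M : \sum_(rho : state V T) trans_w g t [set u in N | (sg u <= t)%N] sg rho *
     J v (maxn t.+1 (rho v)) =
   (if v \in [set u in N | (sg u <= t)%N] then
        \sum_(r < T.+2) ret_w T g t r * J v (maxn t.+1 r)
      else J v (maxn t.+1 (sg v))).
  by apply: (@marg _ _ _ g t _ sg v (fun r => J v (maxn t.+1 r))); apply: ret_sum.
rewrite -M; apply: ler_sum => rho _; apply: ler_wpM2l; [exact: trans_ge0 | exact: IH2].
Qed.
Lemma xstar_bounds (R : realType) (V S T : nat)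
  (lam : 'I_S -> nat -> R) (p : 'I_V -> 'I_S -> R) (g : nat -> R) (xstar : sol R V S) :
  is_xstar T lam p g xstar -> forall u s t, (1 <= t <= T)%N -> 0 <= xstar u s t <= 1.
Proof.
case=> [xLP [xAA [xSQ [[HLP _] [HAA [HSQ [Hx _]]]]]]].
case: Hx => [->|[->|->]] u s t tr.
- by have [H _] := HLP u; apply: H.
- case: HAA => [m [xs [ys [m0 [H0 [Hst ->]]]]]].
  have mpos : 0 < (m%:R : R) by rewrite ltr0n.
  have claim : forall i, (i <= m)%N -> 0 <= xs i u s t <= i%:R / m%:R.
    elim=> [|i IHi] hi.
      by rewrite H0 mul0r lexx.
    have hi' : (1 <= i.+1 <= m)%N by rewrite hi.
    have [Py [_ Hxs]] := Hst i.+1 hi'.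
    have [H _] := Py u; have /andP [y0 y1] := H s t tr.
    have /andP [a0 a1] := IHi (ltnW hi).
    rewrite Hxs /=.
    have e1 : (i.+1)%:R / (m%:R : R) = i%:R / m%:R + 1 / m%:R by rewrite mulrSr mulrDl.
    have e2 : ys i.+1 u s t / m%:R <= 1 / (m%:R : R).
      by apply: ler_wpM2r; [rewrite invr_ge0 ltW | ].
    have e3 : 0 <= ys i.+1 u s t / (m%:R : R) by apply: divr_ge0 => //; rewrite ltW.
    rewrite e1; apply/andP; split; lra.
  have /andP [c0 c1] := claim m (leqnn m).
  by rewrite c0 /= (le_trans c1) // divff // gt_eqF.
- by have [[H _] _] := HSQ u; apply: H.
Qed.

Theorem lemma2 (R : realType) (V S T : nat)
  (lam : 'I_S -> nat -> R) (p : 'I_V -> 'I_S -> R) (g : nat -> R)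
  (xstar xt : 'I_V -> 'I_S -> nat -> R) (J : 'I_V -> nat -> R) :
  (forall s t, 0 <= lam s t) ->
  (forall t, \sum_(s < S) lam s t <= 1) ->
  (forall v s, 0 <= p v s <= 1) ->
  pmf_pos g ->
  is_xstar T lam p g xstar ->
  SN_offline T lam p g xstar xt J ->
  forall v : 'I_V, J v 1%N <= expected_completed T lam p g xt v.
Proof.
move=> Hlam HL Hp Hg Hx HSN v.
have Hxt : forall u s t, (1 <= t <= T)%N -> 0 <= xt u s t <= 1.
  move=> u s t tr; have [_ H] := HSN u; have [H1 _] := H t tr.
  rewrite H1; case: ifP => _; first exact: (xstar_bounds Hx).
  by rewrite lexx ler01.
have := @main_ind _ _ _ _ _ _ _ _ _ _ Hlam HL Hp Hg Hxt HSN v T 1%N (add1n T) isT (init_state V T).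
by rewrite /expected_completed ffunE.
Qed.
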